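(* Let $\alpha\ge0$, $\beta\ge0$, $\gamma<0$, $\omega^2=1$, $c,a\in\mathbb{R}$ with $ca>0$, $N\ge2$, and $r>0$. Consider $$\dot{x}_i=y_i+\frac{ca}{N}\sum_{j=1}^N(x_j-x_i),\qquad \dot{y}_i=-(\alpha x_i^2+\beta y_i^2-\gamma)y_i-\omega^2x_i+\frac{ca}{N}\sum_{j=1}^N(y_j-y_i),\quad i=1,\dots,N.$$ Suppose one of the following holds: (1) $\alpha=0$ and $3\beta r^2>\gamma-ca$; (2) $\alpha\neq0$, $\alpha>3\beta$, $r^2\le\frac{ca\alpha-3ca\beta}{\alpha^2}$, and $3\beta r^2>\gamma-ca$; (3) $\alpha\neq0$, $\alpha<3\beta$, $r^2\le\frac{3ca\beta-ca\alpha}{\alpha^2}$, and $\alpha r^2>\gamma-ca$; (4) $3ca\alpha\beta+\alpha^2(ca-\gamma)>0$, $r^2\ge\max\{\frac{ca\alpha-3ca\beta}{\alpha^2},\frac{3ca\beta-ca\alpha}{\alpha^2}\}$, and $\frac{ca\alpha+3ca\beta-2\sqrt{3c^2a^2\alpha\beta+\alpha^2ca(ca-\gamma)}}{\alpha^2}<r^2<\frac{ca\alpha+3ca\beta+2\sqrt{3c^2a^2\alpha\beta+\alpha^2ca(ca-\gamma)}}{\alpha^2}$. If $x_i(0)^2+y_i(0)^2\le r^2$ for all $i=1,\dots,N$, then $|x_i(t)-x_j(t)|+|y_i(t)-y_j(t)|\to0$ exponentially as $t\to\infty$ for all $i,j$ (complete synchronization). *)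

(* Defs.v *)
From Stdlib Require Import Reals.
From Coquelicot Require Import Coquelicot.
Open Scope R_scope.

(* Oscillators indexed by i = 0, ..., N-1.
   coupling N f i = sum_{j=0}^{N-1} (f j - f i). *)
Definition coupling (N : nat) (f : nat -> R) (i : nat) : R :=
  sum_f_R0 (fun j => f j - f i) (pred N).

Definition is_solution (alpha beta gamma omega c a : R) (N : nat)
  (x y : nat -> R -> R) : Prop :=
  forall t, 0 <= t -> forall i, (i < N)%nat ->
    is_derive (x i) t
      (y i t + c * a / INR N * coupling N (fun j => x j t) i) /\
    is_derive (y i) t
      (- (alpha * (x i t)^2 + beta * (y i t)^2 - gamma) * y i t
       - omega^2 * x i t
       + c * a / INR N * coupling N (fun j => y j t) i).

(* Main.v *)
Require Import Defs.
From Stdlib Require Import Reals Lra Psatz.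
From Coquelicot Require Import Coquelicot.
Open Scope R_scope.

Lemma D_plus (f g : R -> R) (t a b : R) : is_derive f t a -> is_derive g t b ->
  is_derive (fun s => f s + g s) t (a + b).
Proof. intros Hf Hg. exact (is_derive_plus f g t a b Hf Hg). Qed.

Lemma D_mult (f g : R -> R) (t a b : R) : is_derive f t a -> is_derive g t b ->
  is_derive (fun s => f s * g s) t (a * g t + f t * b).
Proof. intros Hf Hg. exact (is_derive_mult f g t a b Hf Hg Rmult_comm). Qed.

Lemma D_const (k t : R) : is_derive (fun _ => k) t 0.
Proof. exact (is_derive_const k t). Qed.

Lemma D_id (t : R) : is_derive (fun s => s) t 1.
Proof. exact (is_derive_id t). Qed.

Lemma D_eq (f : R -> R) (t l l' : R) : is_derive f t l -> l = l' -> is_derive f t l'.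
Proof. intros H ->; exact H. Qed.

Lemma D_ext (f g : R -> R) (t l : R) : (forall s, f s = g s) -> is_derive f t l -> is_derive g t l.
Proof. intros H1 H2. exact (is_derive_ext f g t l H1 H2). Qed.

Lemma D_sub (f g : R -> R) (t a b : R) : is_derive f t a -> is_derive g t b ->
  is_derive (fun s => f s - g s) t (a - b).
Proof. intros Hf Hg.
  apply D_ext with (fun s => f s + (-1) * g s). intro; ring.
  apply D_eq with (a + (0 * g t + (-1) * b)).
  - apply D_plus. exact Hf. apply (D_mult (fun _ => -1) g). apply D_const. exact Hg.
  - ring.
Qed.

Lemma D_sq (f : R -> R) (t a : R) : is_derive f t a -> is_derive (fun s => f s ^ 2) t (2 * f t * a).
Proof. intros Hf. apply D_ext with (fun s => f s * f s). intro; ring.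
  apply D_eq with (a * f t + f t * a). apply D_mult; auto. ring. Qed.

Lemma D_sum (F dF : nat -> R -> R) m (t : R) :
  (forall i, (i <= m)%nat -> is_derive (F i) t (dF i t)) ->
  is_derive (fun s => sum_f_R0 (fun i => F i s) m) t (sum_f_R0 (fun i => dF i t) m).
Proof.
  induction m; intros H; simpl.
  - apply D_ext with (F 0%nat). intro; reflexivity. apply H; lia.
  - apply D_plus. apply IHm. intros; apply H; lia. apply H; lia.
Qed.

Lemma nonincr (F dF : R -> R) :
  (forall s, 0 <= s -> is_derive F s (dF s)) -> (forall s, 0 <= s -> dF s <= 0) ->
  forall t, 0 <= t -> F t <= F 0.
Proof.
  intros HD Hn t Ht.
  destruct (MVT_gen F 0 t dF) as [c [Hc Heq]].
  - intros s Hs. rewrite Rmin_left in Hs by lra. apply HD. lra.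
  - intros s Hs. rewrite Rmin_left in Hs by lra. apply continuity_pt_filterlim.
    apply (ex_derive_continuous (K := R_AbsRing) (V := R_NormedModule) F s).
    exists (dF s). apply HD. lra.
  - rewrite Rmin_left in Hc by lra. rewrite Rmax_right in Hc by lra.
    assert (dF c <= 0) by (apply Hn; lra). nra.
Qed.

Definition psi (z : R) := Rmax 0 z * Rmax 0 z.
Definition dpsi (z : R) := 2 * Rmax 0 z.

Lemma psi_bound (z h : R) : Rabs (psi (z + h) - psi z - dpsi z * h) <= h * h.
Proof.
  unfold psi, dpsi.
  destruct (Rle_dec 0 z); destruct (Rle_dec 0 (z+h)).
  - rewrite !Rmax_right by lra. rewrite Rabs_right; nra.
  - rewrite (Rmax_right 0 z) by lra. rewrite (Rmax_left 0 (z+h)) by lra.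
    rewrite Rabs_right; nra.
  - rewrite (Rmax_left 0 z) by lra. rewrite (Rmax_right 0 (z+h)) by lra.
    rewrite Rabs_right; nra.
  - rewrite !Rmax_left by lra. rewrite Rabs_right; nra.
Qed.

Lemma psi_derive (z : R) : is_derive psi z (dpsi z).
Proof.
  apply is_derive_Reals. intros eps Heps.
  exists (mkposreal eps Heps). intros h Hh Hlt. simpl in Hlt.
  assert (E : (psi (z + h) - psi z) / h - dpsi z = (psi (z + h) - psi z - dpsi z * h) / h)
    by (field; auto).
  rewrite E. unfold Rdiv. rewrite Rabs_mult, Rabs_inv.
  pose proof (psi_bound z h).
  assert (Habs: 0 < Rabs h) by (apply Rabs_pos_lt; auto).
  apply Rle_lt_trans with (h * h * / Rabs h).
  apply Rmult_le_compat_r. left; apply Rinv_0_lt_compat; auto. auto.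
  replace (h * h * / Rabs h) with (Rabs h). exact Hlt.
  replace (h*h) with (Rabs h * Rabs h). field. lra.
  rewrite <- Rabs_mult. apply Rabs_right. nra.
Qed.

Lemma dpsi_mono a b : a <= b -> dpsi a <= dpsi b.
Proof. intros; unfold dpsi. apply Rmult_le_compat_l. lra. apply Rle_max_compat_l; auto. Qed.

Lemma dpsi_nonneg a : 0 <= dpsi a.
Proof. unfold dpsi. pose proof (Rmax_l 0 a). lra. Qed.

Lemma sum_swap (A : nat -> nat -> R) n m :
  sum_f_R0 (fun i => sum_f_R0 (fun j => A i j) m) n =
  sum_f_R0 (fun j => sum_f_R0 (fun i => A i j) n) m.
Proof.
  induction n; simpl.
  - reflexivity.
  - rewrite IHn. rewrite <- plus_sum. reflexivity.
Qed.

Lemma sum_nonneg (f : nat -> R) m : (forall k, (k <= m)%nat -> 0 <= f k) -> 0 <= sum_f_R0 f m.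
Proof.
  induction m; intros H; simpl. apply H; lia.
  assert (0 <= sum_f_R0 f m) by (apply IHm; intros; apply H; lia).
  assert (0 <= f (S m)) by (apply H; lia). lra.
Qed.

Lemma sum_term (f : nat -> R) m i : (forall k, (k <= m)%nat -> 0 <= f k) -> (i <= m)%nat ->
  f i <= sum_f_R0 f m.
Proof.
  induction m; intros H Hi; simpl.
  - assert (i = 0%nat) by lia. subst; lra.
  - destruct (Nat.eq_dec i (S m)). subst.
    assert (0 <= sum_f_R0 f m). { apply sum_nonneg. intros; apply H; lia. } lra.
    assert (f i <= sum_f_R0 f m) by (apply IHm; intros; try apply H; lia).
    assert (0 <= f (S m)) by (apply H; lia). lra.
Qed.

Lemma sum_diff (g : nat -> R) a b m :
  sum_f_R0 (fun k => g k - a) m - sum_f_R0 (fun k => g k - b) m = INR (S m) * (b - a).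
Proof.
  induction m; simpl sum_f_R0.
  - simpl. ring.
  - rewrite S_INR. replace (sum_f_R0 (fun k : nat => g k - a) m + (g (S m) - a) -
     (sum_f_R0 (fun k : nat => g k - b) m + (g (S m) - b))) with
     ((sum_f_R0 (fun k : nat => g k - a) m - sum_f_R0 (fun k : nat => g k - b) m) + (b - a)) by ring.
    rewrite IHm. ring.
Qed.

Lemma f_mvt (al be ga x1 y1 x2 y2 r : R) :
  x1^2 + y1^2 <= r^2 -> x2^2 + y2^2 <= r^2 ->
  exists xi eta, xi^2 + eta^2 <= r^2 /\
    (al * x1^2 + be * y1^2 - ga) * y1 - (al * x2^2 + be * y2^2 - ga) * y2
    = 2 * al * xi * eta * (x1 - x2) + (al * xi^2 + 3 * be * eta^2 - ga) * (y1 - y2).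
Proof.
  intros H1 H2.
  set (h := fun s => (al * (x2 + s*(x1-x2))^2 + be * (y2 + s*(y1-y2))^2 - ga) * (y2 + s*(y1-y2))).
  set (dh := fun s => 2 * al * (x2 + s*(x1-x2)) * (y2 + s*(y1-y2)) * (x1 - x2)
     + (al * (x2 + s*(x1-x2))^2 + 3 * be * (y2 + s*(y1-y2))^2 - ga) * (y1 - y2)).
  assert (HD : forall s, is_derive h s (dh s)).
  { intro s. unfold h, dh. auto_derive. auto. ring. }
  destruct (MVT_gen h 0 1 dh) as [c [Hc Heq]].
  - intros; apply HD.
  - intros s _. apply continuity_pt_filterlim.
    apply (ex_derive_continuous (K := R_AbsRing) (V := R_NormedModule) h s).
    exists (dh s). apply HD.
  - rewrite Rmin_left in Hc by lra. rewrite Rmax_right in Hc by lra.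
    exists (x2 + c*(x1-x2)), (y2 + c*(y1-y2)). split.
    + assert (0 <= c * (1 - c)) by nra.
      assert (0 <= c*(1-c)*((x1-x2)^2+(y1-y2)^2)).
      { apply Rmult_le_pos; [lra | pose proof (pow2_ge_0 (x1-x2)); pose proof (pow2_ge_0 (y1-y2)); lra]. }
      replace ((x2 + c * (x1 - x2)) ^ 2 + (y2 + c * (y1 - y2)) ^ 2) with
        ((1-c)*(x2^2+y2^2) + c*(x1^2+y1^2) - c*(1-c)*((x1-x2)^2+(y1-y2)^2)) by ring.
      nra.
    + transitivity (h 1 - h 0). unfold h; ring. rewrite Heq. unfold dh; ring.
Qed.

Lemma div_le d x y : 0 < d -> x <= y / d -> d * x <= y.
Proof. intros Hd H. apply Rmult_le_compat_l with (r := d) in H; [|lra].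
  replace (d * (y/d)) with y in H by (field; lra). exact H. Qed.
Lemma div_lt_l d x y : 0 < d -> y / d < x -> y < d * x.
Proof. intros Hd H. apply Rmult_lt_compat_l with (r := d) in H; [|lra].
  replace (d * (y/d)) with y in H by (field; lra). exact H. Qed.
Lemma div_lt_r d x y : 0 < d -> x < y / d -> d * x < y.
Proof. intros Hd H. apply Rmult_lt_compat_l with (r := d) in H; [|lra].
  replace (d * (y/d)) with y in H by (field; lra). exact H. Qed.

Lemma reduce K al be D Rr u v m : 0 <= K -> 0 <= al -> 0 <= be -> 0 <= u -> 0 <= v -> u + v <= Rr ->
  m <= K * D -> m <= K*D + K*al*u + (Rr-u)*(3*K*be - al^2*u) ->
  m <= K * (D + al*u + 3*be*v) - al^2*u*v.
Proof.
  intros HK Ha Hb Hu Hv Huv H1 H2.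
  destruct (Rle_dec 0 (3*K*be - al^2*u)).
  - assert (0 <= K*al*u) by (apply Rmult_le_pos; nra).
    assert (0 <= v*(3*K*be - al^2*u)) by (apply Rmult_le_pos; nra). nra.
  - assert (0 <= (Rr-u-v)*(-(3*K*be - al^2*u))) by (apply Rmult_le_pos; nra). nra.
Qed.

Lemma core (alpha beta gamma c a r : R) :
  0 <= alpha -> 0 <= beta -> gamma < 0 -> 0 < c * a -> 0 < r ->
  ( (alpha = 0 /\ 3 * beta * r^2 > gamma - c * a)
    \/ (alpha <> 0 /\ alpha > 3 * beta
        /\ r^2 <= (c * a * alpha - 3 * c * a * beta) / alpha^2
        /\ 3 * beta * r^2 > gamma - c * a)
    \/ (alpha <> 0 /\ alpha < 3 * beta
        /\ r^2 <= (3 * c * a * beta - c * a * alpha) / alpha^2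
        /\ alpha * r^2 > gamma - c * a)
    \/ (3 * c * a * alpha * beta + alpha^2 * (c * a - gamma) > 0
        /\ r^2 >= Rmax ((c * a * alpha - 3 * c * a * beta) / alpha^2)
                       ((3 * c * a * beta - c * a * alpha) / alpha^2)
        /\ (c * a * alpha + 3 * c * a * beta
            - 2 * sqrt (3 * c^2 * a^2 * alpha * beta
                        + alpha^2 * c * a * (c * a - gamma))) / alpha^2 < r^2
        /\ r^2 < (c * a * alpha + 3 * c * a * beta
            + 2 * sqrt (3 * c^2 * a^2 * alpha * beta
                        + alpha^2 * c * a * (c * a - gamma))) / alpha^2) ) ->
  exists m0, 0 < m0 /\ forall u v, 0 <= u -> 0 <= v -> u + v <= r^2 ->
    m0 <= c * a * (c * a - gamma + alpha * u + 3 * beta * v) - alpha^2 * u * v.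
Proof.
  intros Ha Hb Hg HK Hr Hc.
  set (K := c * a) in *. set (R := r^2) in *. set (D := K - gamma).
  assert (HD : 0 < D) by (unfold D; lra).
  assert (HKD : 0 < K * D) by (apply Rmult_lt_0_compat; lra).
  assert (HR : 0 <= R) by (unfold R; nra).
  destruct Hc as [[H0 _] | [[Hn [_ [H1 _]]] | [[Hn [_ [H1 _]]] | [Hpos [_ [H1 H2]]]]]].
  - exists (K * D). split; auto. intros u v Hu Hv Huv. subst alpha.
    assert (0 <= K * (3*beta*v)) by (apply Rmult_le_pos; nra). unfold D in *. nra.
  - exists (K * D). split; auto. intros u v Hu Hv Huv.
    assert (Ha2 : 0 < alpha^2) by (apply pow2_gt_0; auto).
    apply div_le in H1; auto.
    assert (H1' : alpha^2*R <= K*alpha - 3*K*beta) by (unfold K in *; nra). clear H1.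
    apply reduce with (Rr := R); try lra.
    assert (0 <= u * (K*alpha - 3*K*beta - alpha^2*R)) by (apply Rmult_le_pos; nra).
    assert (0 <= K * beta * R) by (apply Rmult_le_pos; nra).
    assert (0 <= alpha^2 * u^2) by nra. nra.
  - exists (K * D). split; auto. intros u v Hu Hv Huv.
    assert (Ha2 : 0 < alpha^2) by (apply pow2_gt_0; auto).
    apply div_le in H1; auto.
    assert (H1' : alpha^2*R <= 3*K*beta - K*alpha) by (unfold K in *; nra). clear H1.
    apply reduce with (Rr := R); try lra.
    assert (0 <= (R-u) * (3*K*beta - K*alpha - alpha^2*R)) by (apply Rmult_le_pos; nra).
    assert (0 <= K * alpha * R) by (apply Rmult_le_pos; nra).
    assert (0 <= alpha^2 * (R-u)^2) by (apply Rmult_le_pos; [lra | apply pow2_ge_0]).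
    replace (K * D + K * alpha * u + (R - u) * (3 * K * beta - alpha ^ 2 * u)) with
      (K*D + K*alpha*R + (R-u) * (3*K*beta - K*alpha - alpha^2*R) + alpha^2 * (R-u)^2) by ring. lra.
  - assert (Hn : alpha <> 0). { intro E. rewrite E in Hpos. lra. }
    assert (Ha2 : 0 < alpha^2) by (apply pow2_gt_0; auto).
    set (Dl := 3 * K * alpha * beta + alpha^2 * D).
    assert (HDl : 0 < Dl) by (unfold Dl, D, K in *; nra).
    replace (3 * c^2 * a^2 * alpha * beta + alpha^2 * c * a * (K - gamma)) with (K * Dl) in H1, H2
      by (unfold Dl, D, K; ring).
    set (S := sqrt (K * Dl)) in *.
    assert (HS : S * S = K * Dl) by (apply sqrt_sqrt; nra).
    apply div_lt_l in H1; auto. apply div_lt_r in H2; auto.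
    assert (H1' : K*alpha + 3*K*beta - 2*S < alpha^2 * R) by (unfold K in *; nra).
    assert (H2' : alpha^2 * R < K*alpha + 3*K*beta + 2*S) by (unfold K in *; nra). clear H1 H2.
    set (B := K*alpha - 3*K*beta - alpha^2*R).
    set (E := 4*alpha^2*(K*D + 3*K*beta*R) - B^2).
    assert (HE : 0 < E).
    { assert (0 < (alpha^2*R - (K*alpha + 3*K*beta) + 2*S) * (K*alpha + 3*K*beta + 2*S - alpha^2*R))
        by (apply Rmult_lt_0_compat; lra).
      replace E with ((alpha^2*R - (K*alpha + 3*K*beta) + 2*S) * (K*alpha + 3*K*beta + 2*S - alpha^2*R)).
      lra. unfold E, B. replace (S^2) with (S*S) by ring. 
      transitivity (4*(S*S) - (alpha^2*R - (K*alpha + 3*K*beta))^2). ring.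
      rewrite HS. unfold Dl, D. ring. }
    exists (Rmin (K*D) (E / (4*alpha^2))). split.
    { apply Rmin_glb_lt; auto. apply Rdiv_lt_0_compat; lra. }
    intros u v Hu Hv Huv. apply reduce with (Rr := R); try lra. apply Rmin_l.
    apply Rle_trans with (E / (4*alpha^2)). apply Rmin_r.
    apply Rmult_le_reg_l with (4*alpha^2). lra.
    replace (4 * alpha ^ 2 * (E / (4 * alpha ^ 2))) with E by (field; lra).
    replace (4 * alpha ^ 2 * (K * D + K * alpha * u + (R - u) * (3 * K * beta - alpha ^ 2 * u)))
      with ((2*alpha^2*u + B)^2 + E) by (unfold E, B; ring).
    pose proof (pow2_ge_0 (2*alpha^2*u + B)). lra.
Qed.

Lemma sum_nonpos (f : nat -> R) m : (forall k, (k <= m)%nat -> f k <= 0) -> sum_f_R0 f m <= 0.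
Proof.
  induction m; intros H; simpl. apply H; lia.
  assert (sum_f_R0 f m <= 0) by (apply IHm; intros; apply H; lia).
  assert (f (S m) <= 0) by (apply H; lia). lra.
Qed.

Lemma sum_ext (f g : nat -> R) m : (forall k, (k <= m)%nat -> f k = g k) -> sum_f_R0 f m = sum_f_R0 g m.
Proof.
  induction m; intros H; simpl. apply H; lia.
  rewrite IHm by (intros; apply H; lia). rewrite H by lia. reflexivity.
Qed.

Lemma mul_sum (k : R) (f : nat -> R) m : k * sum_f_R0 f m = sum_f_R0 (fun i => k * f i) m.
Proof. rewrite scal_sum. apply sum_ext. intros; ring. Qed.

Lemma double_sum (phi n : nat -> R) m :
  (forall i j, n i <= n j -> phi i <= phi j) ->
  sum_f_R0 (fun i => phi i * sum_f_R0 (fun j => n j - n i) m) m <= 0.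
Proof.
  intros Hm.
  set (A := fun i j => phi i * (n j - n i)).
  assert (E : sum_f_R0 (fun i => phi i * sum_f_R0 (fun j => n j - n i) m) m =
              sum_f_R0 (fun i => sum_f_R0 (fun j => A i j) m) m).
  { apply sum_ext; intros. rewrite mul_sum. reflexivity. }
  rewrite E.
  assert (E2 : sum_f_R0 (fun i => sum_f_R0 (fun j => A i j) m) m +
               sum_f_R0 (fun i => sum_f_R0 (fun j => A i j) m) m =
               sum_f_R0 (fun i => sum_f_R0 (fun j => A i j + A j i) m) m).
  { rewrite sum_swap at 2. rewrite <- plus_sum. apply sum_ext; intros.
    rewrite <- plus_sum. reflexivity. }
  assert (sum_f_R0 (fun i => sum_f_R0 (fun j => A i j + A j i) m) m <= 0).
  { apply sum_nonpos; intros i _. apply sum_nonpos; intros j _. unfold A.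
    destruct (Rle_dec (n i) (n j)).
    - pose proof (Hm i j r). nra.
    - assert (n j <= n i) by lra. pose proof (Hm j i H). nra. }
  lra.
Qed.

Lemma dn_bound (al be ga om k xi yi : R) (xs ys : nat -> R) m :
  0 <= al -> 0 <= be -> ga < 0 -> om^2 = 1 -> 0 <= k ->
  2 * xi * (yi + k * sum_f_R0 (fun j => xs j - xi) m)
  + 2 * yi * (- (al * xi^2 + be * yi^2 - ga) * yi - om^2 * xi + k * sum_f_R0 (fun j => ys j - yi) m)
  <= k * sum_f_R0 (fun j => (xs j ^2 + ys j ^2) - (xi^2 + yi^2)) m.
Proof.
  intros Ha Hb Hg Ho Hk. rewrite Ho.
  assert (H1 : 0 <= (al * xi^2 + be * yi^2 - ga) * (yi * yi)).
  { apply Rmult_le_pos. pose proof (pow2_ge_0 xi); pose proof (pow2_ge_0 yi); nra. nra. }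
  assert (H2 : 2 * xi * sum_f_R0 (fun j => xs j - xi) m + 2 * yi * sum_f_R0 (fun j => ys j - yi) m
      <= sum_f_R0 (fun j => (xs j ^2 + ys j ^2) - (xi^2 + yi^2)) m).
  { rewrite !mul_sum. rewrite <- plus_sum. apply sum_Rle. intros j _.
    pose proof (pow2_ge_0 (xs j - xi)); pose proof (pow2_ge_0 (ys j - yi)). nra. }
  assert (k * (2 * xi * sum_f_R0 (fun j => xs j - xi) m + 2 * yi * sum_f_R0 (fun j => ys j - yi) m)
      <= k * sum_f_R0 (fun j => (xs j ^2 + ys j ^2) - (xi^2 + yi^2)) m)
    by (apply Rmult_le_compat_l; auto).
  nra.
Qed.

Lemma qform K A Amax b ex ey eps m0 : 0 < K -> 0 <= A -> A <= Amax -> 0 < eps -> eps <= K/2 ->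
  eps*(2*K+Amax) <= m0 -> m0 <= K*(K+A) - b^2 ->
  eps*(ex^2+ey^2) <= K*ex^2 + (K+A)*ey^2 + 2*b*ex*ey.
Proof.
  intros HK HA HAm He He2 Hm Hg.
  set (k1 := K - eps). set (k2 := K + A - eps).
  assert (Hk1 : 0 < k1) by (unfold k1; lra).
  assert (Hd : 0 <= k1*k2 - b^2).
  { unfold k1, k2. assert (eps * A <= eps * Amax) by (apply Rmult_le_compat_l; lra). nra. }
  assert (0 <= k1 * (K*ex^2 + (K+A)*ey^2 + 2*b*ex*ey - eps*(ex^2+ey^2))).
  { replace (k1 * (K*ex^2 + (K+A)*ey^2 + 2*b*ex*ey - eps*(ex^2+ey^2))) with
      ((k1*ex + b*ey)^2 + (k1*k2 - b^2)*ey^2) by (unfold k1, k2; ring).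
    pose proof (pow2_ge_0 (k1*ex+b*ey)). pose proof (pow2_ge_0 ey).
    assert (0 <= (k1*k2 - b^2)*ey^2) by (apply Rmult_le_pos; auto). lra. }
  assert (0 <= K*ex^2 + (K+A)*ey^2 + 2*b*ex*ey - eps*(ex^2+ey^2)).
  { apply Rmult_le_reg_l with k1; auto. lra. }
  lra.
Qed.

Lemma coupling_diff N f i j : (1 <= N)%nat ->
  coupling N f i - coupling N f j = INR N * (f j - f i).
Proof.
  intros HN. unfold coupling. rewrite (sum_diff f (f i) (f j)).
  replace (S (pred N)) with N by lia. reflexivity.
Qed.

Theorem theorem4p8 (alpha beta gamma omega c a r : R) (N : nat)
  (x y : nat -> R -> R) :
  0 <= alpha -> 0 <= beta -> gamma < 0 -> omega ^ 2 = 1 ->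
  0 < c * a -> (2 <= N)%nat -> 0 < r ->
  ( (alpha = 0 /\ 3 * beta * r^2 > gamma - c * a)
    \/ (alpha <> 0 /\ alpha > 3 * beta
        /\ r^2 <= (c * a * alpha - 3 * c * a * beta) / alpha^2
        /\ 3 * beta * r^2 > gamma - c * a)
    \/ (alpha <> 0 /\ alpha < 3 * beta
        /\ r^2 <= (3 * c * a * beta - c * a * alpha) / alpha^2
        /\ alpha * r^2 > gamma - c * a)
    \/ (3 * c * a * alpha * beta + alpha^2 * (c * a - gamma) > 0
        /\ r^2 >= Rmax ((c * a * alpha - 3 * c * a * beta) / alpha^2)
                       ((3 * c * a * beta - c * a * alpha) / alpha^2)
        /\ (c * a * alpha + 3 * c * a * beta
            - 2 * sqrt (3 * c^2 * a^2 * alpha * beta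
                        + alpha^2 * c * a * (c * a - gamma))) / alpha^2 < r^2
        /\ r^2 < (c * a * alpha + 3 * c * a * beta
            + 2 * sqrt (3 * c^2 * a^2 * alpha * beta
                        + alpha^2 * c * a * (c * a - gamma))) / alpha^2) ) ->
  is_solution alpha beta gamma omega c a N x y ->
  (forall i, (i < N)%nat -> (x i 0)^2 + (y i 0)^2 <= r^2) ->
  forall i j, (i < N)%nat -> (j < N)%nat ->
    exists C lam, 0 < lam /\
      forall t, 0 <= t ->
        Rabs (x i t - x j t) + Rabs (y i t - y j t) <= C * exp (- lam * t).
Proof.
  intros Ha Hb Hg Ho HK HN Hr Hcases Hsol Hinit.
  unfold is_solution in Hsol.
  assert (HNr : 0 < INR N) by (apply lt_0_INR; lia).
  set (dx := fun i t => y i t + c * a / INR N * coupling N (fun j => x j t) i).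
  set (dy := fun i t => - (alpha * (x i t)^2 + beta * (y i t)^2 - gamma) * y i t
       - omega^2 * x i t + c * a / INR N * coupling N (fun j => y j t) i).
  assert (Hk : 0 <= c * a / INR N) by (apply Rlt_le, Rdiv_lt_0_compat; lra).
  assert (Inv : forall t, 0 <= t -> forall i, (i < N)%nat -> x i t ^ 2 + y i t ^ 2 <= r ^ 2).
  { set (W := fun t => sum_f_R0 (fun i => psi (x i t ^ 2 + y i t ^ 2 - r^2)) (pred N)).
    set (dW := fun t => sum_f_R0 (fun i => dpsi (x i t ^ 2 + y i t ^ 2 - r^2)
                 * (2 * x i t * dx i t + 2 * y i t * dy i t)) (pred N)).
    assert (HW : forall t, 0 <= t -> is_derive W t (dW t)).
    { intros t Ht. unfold W, dW.
      apply (D_sum (fun i s => psi (x i s ^ 2 + y i s ^ 2 - r^2))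
                   (fun i s => dpsi (x i s ^ 2 + y i s ^ 2 - r^2) * (2 * x i s * dx i s + 2 * y i s * dy i s))).
      intros i Hi. assert (Hi' : (i < N)%nat) by lia.
      destruct (Hsol t Ht i Hi') as [Hx Hy].
      apply D_eq with ((2 * x i t * dx i t + 2 * y i t * dy i t) * dpsi (x i t ^ 2 + y i t ^ 2 - r^2)).
      2: ring.
      apply (is_derive_comp psi (fun s => x i s ^ 2 + y i s ^ 2 - r^2)).
      apply psi_derive.
      apply D_eq with (2 * x i t * dx i t + 2 * y i t * dy i t - 0). 2: ring.
      apply D_sub. apply D_plus; apply D_sq. exact Hx. exact Hy. apply D_const. }
    assert (HdW : forall t, 0 <= t -> dW t <= 0).
    { intros t Ht. unfold dW.
      apply Rle_trans with (sum_f_R0 (fun i => dpsi (x i t^2 + y i t^2 - r^2) *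
         (c * a / INR N * sum_f_R0 (fun j => (x j t ^2 + y j t^2) - (x i t^2 + y i t^2)) (pred N))) (pred N)).
      - apply sum_Rle. intros i Hi. apply Rmult_le_compat_l. apply dpsi_nonneg.
        unfold dx, dy, coupling. apply dn_bound; auto.
      - pose proof (double_sum (fun i => dpsi (x i t^2 + y i t^2 - r^2)) (fun i => x i t^2 + y i t^2) (pred N))
          as Hds.
        cbv beta in Hds.
        assert (Hs : sum_f_R0 (fun i => dpsi (x i t ^ 2 + y i t ^ 2 - r ^ 2) *
              sum_f_R0 (fun j => x j t ^ 2 + y j t ^ 2 - (x i t ^ 2 + y i t ^ 2)) (pred N)) (pred N) <= 0).
        { apply Hds. intros i0 j0 H. apply dpsi_mono. lra. }
        replace (sum_f_R0 (fun i => dpsi (x i t^2 + y i t^2 - r^2) *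
         (c * a / INR N * sum_f_R0 (fun j => (x j t ^2 + y j t^2) - (x i t^2 + y i t^2)) (pred N))) (pred N))
        with (c * a / INR N * sum_f_R0 (fun i => dpsi (x i t ^ 2 + y i t ^ 2 - r ^ 2) *
              sum_f_R0 (fun j => x j t ^ 2 + y j t ^ 2 - (x i t ^ 2 + y i t ^ 2)) (pred N)) (pred N)).
        nra.
        rewrite mul_sum. apply sum_ext. intros; ring. }
    assert (HW0 : W 0 = 0).
    { unfold W. transitivity (sum_f_R0 (fun _ => 0) (pred N)).
      - apply sum_ext. intros i Hi. unfold psi. rewrite Rmax_left. ring.
        pose proof (Hinit i ltac:(lia)). lra.
      - clear. induction (pred N); simpl. reflexivity. rewrite IHn. ring. }
    intros t Ht i Hi.
    pose proof (nonincr W dW HW HdW t Ht) as Hmon.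
    assert (Hterm : psi (x i t^2 + y i t^2 - r^2) <= W t).
    { unfold W. apply (sum_term (fun i => psi (x i t ^ 2 + y i t ^ 2 - r^2))).
      intros k0 _. unfold psi. pose proof (Rmax_l 0 (x k0 t ^2 + y k0 t^2 - r^2)). nra. lia. }
    unfold psi in Hterm. pose proof (Rmax_l 0 (x i t^2 + y i t^2 - r^2)).
    pose proof (Rmax_r 0 (x i t ^2 + y i t^2 - r^2)). nra. }
  destruct (core alpha beta gamma c a r Ha Hb Hg HK Hr Hcases) as [m0 [Hm0 Hcore]].
  set (Amax := (alpha + 3*beta)*r^2 - gamma).
  assert (HAmax : 0 < Amax) by (unfold Amax; assert (0 <= (alpha + 3*beta)*r^2) by
     (apply Rmult_le_pos; [lra | apply pow2_ge_0]); lra).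
  set (eps := Rmin (c*a/2) (m0/(2*(c*a)+Amax))).
  assert (He : 0 < eps).
  { apply Rmin_glb_lt. lra. apply Rdiv_lt_0_compat; lra. }
  assert (He1 : eps <= c*a/2) by apply Rmin_l.
  assert (He2 : eps * (2*(c*a)+Amax) <= m0).
  { apply Rle_trans with (m0/(2*(c*a)+Amax) * (2*(c*a)+Amax)).
    apply Rmult_le_compat_r. lra. apply Rmin_r. right; field; lra. }
  intros i j Hi Hj.
  set (V := fun t => (x i t - x j t)^2 + (y i t - y j t)^2).
  set (dV := fun t => 2 * (x i t - x j t) * (dx i t - dx j t) + 2 * (y i t - y j t) * (dy i t - dy j t)).
  assert (HV : forall t, 0 <= t -> is_derive V t (dV t)).
  { intros t Ht. destruct (Hsol t Ht i Hi) as [Hxi Hyi]. destruct (Hsol t Ht j Hj) as [Hxj Hyj].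
    unfold V, dV. apply D_plus.
    - apply (D_sq (fun s => x i s - x j s)). apply (D_sub (x i) (x j)); assumption.
    - apply (D_sq (fun s => y i s - y j s)). apply (D_sub (y i) (y j)); assumption. }
  assert (HdV : forall t, 0 <= t -> dV t <= -2 * eps * V t).
  { intros t Ht. unfold dV, V.
    assert (Edx : dx i t - dx j t = (y i t - y j t) - c*a*(x i t - x j t)).
    { unfold dx. pose proof (coupling_diff N (fun k => x k t) i j ltac:(lia)) as Cd. cbv beta in Cd.
      replace (y i t + c * a / INR N * coupling N (fun j0 => x j0 t) i -
        (y j t + c * a / INR N * coupling N (fun j0 => x j0 t) j)) with
        (y i t - y j t + c * a / INR N * (coupling N (fun j0 => x j0 t) i - coupling N (fun j0 => x j0 t) j)) by ring.
      rewrite Cd. field. lra. }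
    assert (Edy : dy i t - dy j t = - ((alpha * x i t ^ 2 + beta * y i t ^ 2 - gamma) * y i t
                   - (alpha * x j t ^ 2 + beta * y j t ^ 2 - gamma) * y j t)
                   - (x i t - x j t) - c*a*(y i t - y j t)).
    { unfold dy. pose proof (coupling_diff N (fun k => y k t) i j ltac:(lia)) as Cd. cbv beta in Cd.
      rewrite Ho.
      replace (- (alpha * x i t ^ 2 + beta * y i t ^ 2 - gamma) * y i t - 1 * x i t +
        c * a / INR N * coupling N (fun j0 => y j0 t) i -
        (- (alpha * x j t ^ 2 + beta * y j t ^ 2 - gamma) * y j t - 1 * x j t +
         c * a / INR N * coupling N (fun j0 => y j0 t) j)) with
        (- ((alpha * x i t ^ 2 + beta * y i t ^ 2 - gamma) * y i t
                   - (alpha * x j t ^ 2 + beta * y j t ^ 2 - gamma) * y j t)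
                   - (x i t - x j t) + c * a / INR N * (coupling N (fun j0 => y j0 t) i - coupling N (fun j0 => y j0 t) j)) by ring.
      rewrite Cd. field. lra. }
    rewrite Edx, Edy.
    destruct (f_mvt alpha beta gamma (x i t) (y i t) (x j t) (y j t) r (Inv t Ht i Hi) (Inv t Ht j Hj))
      as [xi [eta [Hxe Hmvt]]].
    rewrite Hmvt.
    set (A := alpha * xi ^ 2 + 3 * beta * eta ^ 2 - gamma).
    assert (HA0 : 0 <= A).
    { unfold A. pose proof (pow2_ge_0 xi); pose proof (pow2_ge_0 eta).
      assert (0 <= alpha * xi^2) by (apply Rmult_le_pos; lra).
      assert (0 <= beta * eta^2) by (apply Rmult_le_pos; lra). lra. }
    assert (HA1 : A <= Amax).
    { unfold A, Amax. pose proof (pow2_ge_0 xi); pose proof (pow2_ge_0 eta).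
      assert (alpha * xi^2 <= alpha * r^2) by (apply Rmult_le_compat_l; lra).
      assert (beta * eta^2 <= beta * r^2) by (apply Rmult_le_compat_l; lra). lra. }
    assert (Hg0 : m0 <= c*a*(c*a + A) - (alpha*xi*eta)^2).
    { pose proof (Hcore (xi^2) (eta^2) (pow2_ge_0 xi) (pow2_ge_0 eta) Hxe) as Hc.
      replace (c*a*(c*a + A) - (alpha*xi*eta)^2) with
        (c * a * (c * a - gamma + alpha * xi^2 + 3 * beta * eta^2) - alpha ^ 2 * xi^2 * eta^2)
        by (unfold A; ring). exact Hc. }
    pose proof (qform (c*a) A Amax (alpha*xi*eta) (x i t - x j t) (y i t - y j t) eps m0
                  HK HA0 HA1 He He1 He2 Hg0) as Hq.
    replace (2 * (x i t - x j t) * (y i t - y j t - c * a * (x i t - x j t)) +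
      2 * (y i t - y j t) * (- (2 * alpha * xi * eta * (x i t - x j t) + A * (y i t - y j t)) -
         (x i t - x j t) - c * a * (y i t - y j t)))
    with (-2 * (c * a * (x i t - x j t) ^ 2 + (c * a + A) * (y i t - y j t) ^ 2 +
           2 * (alpha * xi * eta) * (x i t - x j t) * (y i t - y j t))) by ring.
    lra. }
  set (G := fun t => V t * exp (2 * eps * t)).
  assert (HG : forall t, 0 <= t -> is_derive G t ((dV t + 2 * eps * V t) * exp (2 * eps * t))).
  { intros t Ht. unfold G.
    assert (Hexp : is_derive (fun s => exp (2 * eps * s)) t (2 * eps * exp (2 * eps * t))).
    { auto_derive. auto. ring. }
    apply D_eq with (dV t * exp (2 * eps * t) + V t * (2 * eps * exp (2 * eps * t))).
    apply (D_mult V (fun s => exp (2 * eps * s))). apply HV; auto. exact Hexp. ring. }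
  assert (HdG : forall t, 0 <= t -> (dV t + 2 * eps * V t) * exp (2 * eps * t) <= 0).
  { intros t Ht. pose proof (HdV t Ht). pose proof (exp_pos (2*eps*t)). nra. }
  exists (sqrt (2 * V 0)), eps. split; auto.
  intros t Ht.
  pose proof (nonincr G _ HG HdG t Ht) as HGt.
  unfold G in HGt. replace (2 * eps * 0) with 0 in HGt by ring. rewrite exp_0 in HGt.
  set (E1 := exp (eps * t)). set (E2 := exp (- eps * t)).
  assert (HE12 : E1 * E2 = 1).
  { unfold E1, E2. rewrite <- exp_plus. replace (eps * t + - eps * t) with 0 by ring. apply exp_0. }
  assert (HE : exp (2 * eps * t) = E1 * E1).
  { unfold E1. rewrite <- exp_plus. f_equal. ring. }
  rewrite HE in HGt.
  assert (HE2 : 0 < E2) by apply exp_pos.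
  assert (HV0 : 0 <= V 0) by (unfold V; pose proof (pow2_ge_0 (x i 0 - x j 0)); pose proof (pow2_ge_0 (y i 0 - y j 0)); lra).
  assert (HVt : V t <= V 0 * (E2 * E2)).
  { assert (V t * (E1 * E1) * (E2 * E2) <= V 0 * (E2 * E2)).
    { apply Rmult_le_compat_r. nra. lra. }
    replace (V t * (E1 * E1) * (E2 * E2)) with (V t * ((E1 * E2) * (E1 * E2))) in H by ring.
    rewrite HE12 in H. lra. }
  set (z := Rabs (x i t - x j t) + Rabs (y i t - y j t)).
  assert (Hz0 : 0 <= z) by (unfold z; pose proof (Rabs_pos (x i t - x j t)); pose proof (Rabs_pos (y i t - y j t)); lra).
  assert (Hz2 : z * z <= 2 * V t).
  { unfold z, V. rewrite <- (pow2_abs (x i t - x j t)). rewrite <- (pow2_abs (y i t - y j t)).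
    pose proof (pow2_ge_0 (Rabs (x i t - x j t) - Rabs (y i t - y j t))). nra. }
  set (C := sqrt (2 * V 0)).
  assert (HC : C * C = 2 * V 0) by (apply sqrt_sqrt; lra).
  assert (HC0 : 0 <= C) by apply sqrt_pos.
  assert (Hw : (C * E2) * (C * E2) >= z * z).
  { replace ((C * E2) * (C * E2)) with ((C*C) * (E2*E2)) by ring. rewrite HC. nra. }
  fold E2. fold z.
  assert (0 <= C * E2) by nra.
  nra.
Qed.
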